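(* Let $A:\Omega\to\mathbb C^{d\times d}$, $b,c:\Omega\to\mathbb C^d$, $V:\Omega\to\mathbb R_+$ and $p>1$, $q=p/(p-1)$. Suppose that $\Gamma_p^{A,b,c,V}(x,\xi)\ge0$ for almost all $x\in\Omega$ and all $\xi\in\mathbb C^d$. Then for almost all $x\in\Omega$ and all $\alpha,\beta\in\mathbb R^d$, $$\tfrac{4}{pq}\langle \Re A(x)\alpha,\alpha\rangle+\langle\Re A(x)\beta,\beta\rangle+2\langle(p^{-1}\Im A(x)+q^{-1}\Im A(x)^* )\alpha,\beta\rangle+\langle\Im(b(x)+c(x)),\beta\rangle+2\Big\langle\Re\Big(\tfrac{b(x)}p+\tfrac{c(x)}q\Big),\alpha\Big\rangle+V(x)\ge0,$$ i.e. the Cialdea–Maz'ya condition holds with $\theta=\nu=1$.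
   Context: $\Omega\subseteq\mathbb R^d$ open. On $\mathbb C^d$, $\langle \xi,\sigma\rangle=\sum_j\xi_j\overline{\sigma_j}$; in the displayed inequality the brackets are the real inner product on $\mathbb R^d$, and $\Re A,\Im A$ denote the entrywise real and imaginary parts of the matrix, $A^*$ its conjugate transpose, and $\Re,\Im$ of vectors are taken componentwise. $\mathcal{J}_p\xi=\frac p2(\xi+(1-\frac2p)\overline\xi)$ and $\Gamma_p^{A,b,c,V}(x,\xi)=\Re\langle A(x)\xi,\mathcal J_p\xi\rangle+\Re\langle b(x)+\mathcal J_pc(x),\xi\rangle+V(x)$. *)

(* Defs.v *)
From HB Require Import structures.
From mathcomp Require Import all_boot all_order all_algebra.
From mathcomp Require Import all_classical all_reals all_analysis.
From mathcomp Require Import complex.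
Set Implicit Arguments. Unset Strict Implicit. Unset Printing Implicit Defensive.
Import Order.TTheory GRing.Theory Num.Theory.
Local Open Scope ring_scope.

Section Defs.
Variable R : realType.
Variable d : nat.
Local Notation C := (R[i]).

Definition cdot (xi sigma : 'cV[C]_d) : C :=
  \sum_(j < d) xi j 0 * conjc (sigma j 0).

Definition rdot (u v : 'cV[R]_d) : R := \sum_(j < d) u j 0 * v j 0.

Definition Jp (p : R) (xi : 'cV[C]_d) : 'cV[C]_d :=
  \col_j (((p / 2)%:C)%C * (xi j 0 + ((1 - 2 / p)%:C)%C * conjc (xi j 0))).

Definition ReMx m n (M : 'M[C]_(m, n)) : 'M[R]_(m, n) := map_mx (@complex.Re R) M.
Definition ImMx m n (M : 'M[C]_(m, n)) : 'M[R]_(m, n) := map_mx (@complex.Im R) M.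
Definition adjM (M : 'M[C]_d) : 'M[C]_d := map_mx conjc (M^T).

Definition Gamma_p {T : Type} (p : R) (A : T -> 'M[C]_d) (b c : T -> 'cV[C]_d)
  (V : T -> R) (x : T) (xi : 'cV[C]_d) : R :=
  complex.Re (cdot (A x *m xi) (Jp p xi)) + complex.Re (cdot (b x + Jp p (c x)) xi) + V x.

End Defs.

(* Main.v *)
Require Import Defs.
From HB Require Import structures.
From mathcomp Require Import all_boot all_order all_algebra.
From mathcomp Require Import all_classical all_reals all_analysis.
From mathcomp Require Import complex.
From mathcomp Require Import lra ring.
Import Order.TTheory GRing.Theory Num.Theory.
Local Open Scope ring_scope.

Section K.
Variable R : realType.
Variable d : nat.
Local Notation C := (R[i]).

Lemma ReD (x y : C) : complex.Re (x + y) = complex.Re x + complex.Re y.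
Proof. by case: x; case: y. Qed.
Lemma Re0 : complex.Re (0 : C) = 0. Proof. by []. Qed.
Lemma ReS (n : nat) (F : 'I_n -> C) : complex.Re (\sum_(i < n) F i) = \sum_(i < n) complex.Re (F i).
Proof. exact: (big_morph _ ReD Re0). Qed.

Definition xi (p : R) (al be : 'cV[R]_d) : 'cV[C]_d := \col_j ((2/p * al j 0) +i* (be j 0))%C.

Lemma part2 (p : R) (bb cc : 'cV[C]_d) (al be : 'cV[R]_d) : 1 < p ->
  complex.Re (cdot (bb + Jp p cc) (xi p al be)) =
  rdot (ImMx (bb + cc)) be
  + 2 * rdot (ReMx (((p^-1)%:C)%C *: bb + (((p / (p-1))^-1)%:C)%C *: cc)) al.
Proof.
move=> p1; have p0 : p != 0 by rewrite gt_eqF // (lt_trans ltr01).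
have p10 : p - 1 != 0 by rewrite subr_eq0 gt_eqF.
rewrite /cdot /rdot ReS mulr_sumr -big_split; apply: eq_bigr => j _.
rewrite !mxE; case: (bb j 0) => b1 b2; case: (cc j 0) => c1 c2 /=.
field; by apply/andP.
Qed.
Lemma rdotM (X : 'M[R]_d) (a b : 'cV[R]_d) :
  rdot (X *m a) b = \sum_(j < d) \sum_(k < d) X j k * a k 0 * b j 0.
Proof. rewrite /rdot; apply: eq_bigr => j _; rewrite mxE mulr_suml; apply: eq_bigr => k _; by []. Qed.

Lemma part1 (p : R) (M : 'M[C]_d) (al be : 'cV[R]_d) : 1 < p ->
  let q := p / (p - 1) in
  4 / (p * q) * rdot (ReMx M *m al) al
            + rdot (ReMx M *m be) be
            + 2 * rdot ((p^-1 *: ImMx M + q^-1 *: ImMx (adjM M)) *m al) be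
  = complex.Re (cdot (M *m xi p al be) (Jp p (xi p al be))).
Proof.
move=> p1 q; have p0 : p != 0 by rewrite gt_eqF // (lt_trans ltr01).
have p10 : p - 1 != 0 by rewrite subr_eq0 gt_eqF.
rewrite !rdotM.
have -> : \sum_(j < d) \sum_(k < d) (p^-1 *: ImMx M + q^-1 *: ImMx (adjM M)) j k * al k 0 * be j 0
  = \sum_(j < d) \sum_(k < d) (p^-1 * complex.Im (M j k) * al k 0 * be j 0
                               - q^-1 * complex.Im (M j k) * al j 0 * be k 0).
  have E : \sum_(j < d) \sum_(k < d) q^-1 * complex.Im (M k j) * al k 0 * be j 0
      = \sum_(j < d) \sum_(k < d) q^-1 * complex.Im (M j k) * al j 0 * be k 0.
    by rewrite exchange_big.
  rewrite [RHS](eq_bigr (fun j => \sum_(k < d) p^-1 * complex.Im (M j k) * al k 0 * be j 0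
       - \sum_(k < d) q^-1 * complex.Im (M j k) * al j 0 * be k 0)); last first.
    by move=> j _; rewrite -sumrB.
  rewrite sumrB -E -sumrB; apply: eq_bigr => j _; rewrite -sumrB; apply: eq_bigr => k _.
  rewrite !mxE; case: (M j k) => m1 m2; case: (M k j) => n1 n2 /=; ring.
rewrite /cdot ReS !mulr_sumr -!big_split; apply: eq_bigr => j _.
rewrite !mxE mulr_suml ReS !mulr_sumr -!big_split; apply: eq_bigr => k _.
rewrite !mxE /=; case: (M j k) => m1 m2 /=; rewrite /q; field; by apply/andP.
Qed.
End K.
Arguments xi {R d}.
Arguments part1 {R d}.
Arguments part2 {R d}.

Theorem proposition5p4 (R : realType) (d : nat)
  (dT : measure_display) (T : measurableType dT)
  (mu : {measure set T -> \bar R}) (Omega : set T)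
  (A : T -> 'M[R[i]]_d) (b c : T -> 'cV[R[i]]_d) (V : T -> R) (p : R) :
  (forall x, Omega x -> 0 <= V x) ->
  1 < p ->
  let q := p / (p - 1) in
  {ae mu, forall x, Omega x ->
     forall xi : 'cV[R[i]]_d, 0 <= Gamma_p p A b c V x xi} ->
  {ae mu, forall x, Omega x ->
     forall alpha beta : 'cV[R]_d,
       0 <= 4 / (p * q) * rdot (ReMx (A x) *m alpha) alpha
            + rdot (ReMx (A x) *m beta) beta
            + 2 * rdot ((p^-1 *: ImMx (A x) + q^-1 *: ImMx (adjM (A x))) *m alpha) beta
            + rdot (ImMx (b x + c x)) beta
            + 2 * rdot (ReMx (((p^-1)%:C)%C *: b x + ((q^-1)%:C)%C *: c x)) alpha
            + V x}.
Proof.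
move=> _ p1 q H; apply: filterS H => x H Ox al be.
have := H Ox (xi p al be); rewrite /Gamma_p.
rewrite -(part1 p (A x) al be p1) (part2 p (b x) (c x) al be p1) -/q.
by rewrite !addrA.
Qed.
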